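(* Let $f_0,f_1\in \mathrm{PL}_0(\mathbf{I})$ and let $(a,c)$ be an orbital of $f_0$ that is not an orbital of $f_1$. Assume that every orbital $B$ of $f_1$ satisfies either $B\subseteq(a,c)$ or $B\cap(a,c)=\emptyset$. Let $(b_1,d_1),\dots,(b_n,d_n)$, with $n\ge1$, be all the orbitals of $f_1$ properly contained in $(a,c)$, in increasing order. Suppose that either (Up) $(a,c)$ is an up-bump of $f_0$ and: $a<b_1$; there is $p<c$ with $f_0|_{[p,c]}=f_1|_{[p,c]}$; $d_n=c$; if $p$ is the minimal such point then $b_nf_0\ge p$; and $b_1f_0>b_n$; or (Down) $(a,c)$ is a down-bump of $f_0$ and: $d_n<c$; there is $\rho>a$ with $f_0|_{[a,\rho]}=f_1|_{[a,\rho]}$; $b_1=a$; if $\rho$ is the maximal such point then $d_1f_0\le\rho$; and $d_nf_0<d_1$. Then $[f_0f_1^{-1},f_1^{f_0^2}]|_{[a,c]}=1$.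
   Context: $\mathrm{PL}_0(\mathbf{I})$ is the group of orientation-preserving piecewise-linear homeomorphisms of $[0,1]$ with finitely many points of non-differentiability. Functions act on the right: $tf=f(t)$, $fg=g\circ f$, $a^b=b^{-1}ab$, $[a,b]=aba^{-1}b^{-1}$. The orbitals of $f$ are the connected components (open intervals) of $\operatorname{Supp}(f)=\{x: xf\ne x\}$; an orbital $A$ is an up-bump (resp. down-bump) if $xf>x$ (resp. $xf<x$) for all $x\in A$. *)

(* Defs.v *)
(* concrete reals R. Functions act on the right: t f = f t. *)
From Stdlib Require Import Reals Lra Lia.
Open Scope R_scope.

Definition affine_on (f : R -> R) (u v : R) : Prop :=
  exists m q : R, forall x, u <= x <= v -> f x = m * x + q.

(* PL_0(I): orientation-preserving PL homeomorphism of [0,1] with finitely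
   many breakpoints.  Values outside [0,1] are irrelevant. *)
Definition PL0 (f : R -> R) : Prop :=
  f 0 = 0 /\ f 1 = 1 /\
  (forall x y, 0 <= x -> x < y -> y <= 1 -> f x < f y) /\
  exists (k : nat) (t : nat -> R),
    t 0%nat = 0 /\ t k = 1 /\
    (forall i, (i < k)%nat -> t i < t (S i)) /\
    (forall i, (i < k)%nat -> affine_on f (t i) (t (S i))).

Definition inverse_on_I (f g : R -> R) : Prop :=
  forall x, 0 <= x <= 1 -> g (f x) = x /\ f (g x) = x.

Definition in_supp (f : R -> R) (x : R) : Prop := 0 <= x <= 1 /\ f x <> x.

(* (u,v) is an orbital of f: a connected component of Supp f, i.e. an open
   interval contained in Supp f whose endpoints are not in Supp f. *)
Definition orbital (f : R -> R) (u v : R) : Prop :=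
  0 <= u /\ u < v /\ v <= 1 /\
  (forall x, u < x < v -> in_supp f x) /\
  ~ in_supp f u /\ ~ in_supp f v.

Definition up_bump (f : R -> R) (u v : R) : Prop :=
  orbital f u v /\ forall x, u < x < v -> f x > x.

Definition down_bump (f : R -> R) (u v : R) : Prop :=
  orbital f u v /\ forall x, u < x < v -> f x < x.

Definition agree_on (f g : R -> R) (u v : R) : Prop :=
  forall x, u <= x <= v -> f x = g x.

(* Right action: t (x y) = (t x) y.  Commutator [x,y] = x y x^-1 y^-1,
   so t [x,y] = yi (xi (y (x t))). *)
Definition comm_act (x xi y yi : R -> R) (t : R) : R := yi (xi (y (x t))).

(* Main.v *)
Require Import Defs.
From Stdlib Require Import Reals Lra Lia Classical.
Open Scope R_scope.

Lemma part_right (t : nat -> R) (k : nat) x :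
  t 0%nat = 0 -> (forall i, (i < k)%nat -> t i < t (S i)) -> 0 <= x ->
  forall j, (j <= k)%nat -> x < t j -> exists i, (i < j)%nat /\ t i <= x < t (S i).
Proof.
  intros H0 Hinc Hx j. induction j as [|j IH]; intros Hj Hxj.
  - lra.
  - destruct (Rlt_or_le x (t j)) as [h|h].
    + destruct (IH ltac:(lia) h) as [i [Hi Hi2]]. exists i; split; [lia|auto].
    + exists j; split; [lia|]; lra.
Qed.

Lemma part_left (t : nat -> R) (k : nat) x :
  t 0%nat = 0 -> (forall i, (i < k)%nat -> t i < t (S i)) -> 0 < x ->
  forall j, (j <= k)%nat -> x <= t j -> exists i, (i < j)%nat /\ t i < x <= t (S i).
Proof.
  intros H0 Hinc Hx j. induction j as [|j IH]; intros Hj Hxj.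
  - lra.
  - destruct (Rle_or_lt x (t j)) as [h|h].
    + destruct (IH ltac:(lia) h) as [i [Hi Hi2]]. exists i; split; [lia|auto].
    + exists j; split; [lia|]; lra.
Qed.

Lemma part_le1 (t : nat -> R) (k : nat) :
  (forall i, (i < k)%nat -> t i < t (S i)) ->
  forall d j, (j + d = k)%nat -> t j <= t k.
Proof.
  intros Hinc d. induction d as [|d IH]; intros j Hj.
  - replace j with k by lia; lra.
  - assert (t j < t (S j)) by (apply Hinc; lia).
    assert (t (S j) <= t k) by (apply IH; lia). lra.
Qed.

Lemma part_ge0 (t : nat -> R) (k : nat) :
  t 0%nat = 0 -> (forall i, (i < k)%nat -> t i < t (S i)) ->
  forall j, (j <= k)%nat -> 0 <= t j.
Proof.
  intros H0 Hinc j. induction j as [|j IH]; intros Hj.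
  - lra.
  - assert (t j < t (S j)) by (apply Hinc; lia). specialize (IH ltac:(lia)). lra.
Qed.

Lemma piece_right f x : PL0 f -> 0 <= x < 1 ->
  exists e m q, x < e <= 1 /\ forall y, x <= y <= e -> f y = m * y + q.
Proof.
  intros [_ [_ [_ [k [t [H0 [Hk [Hinc Haff]]]]]]]] Hx.
  destruct (part_right t k x H0 Hinc ltac:(lra) k (Nat.le_refl k) ltac:(lra)) as [i [Hi Hti]].
  destruct (Haff i Hi) as [m [q Hmq]].
  exists (t (S i)), m, q. split.
  - split; [lra|]. rewrite <- Hk. apply (part_le1 t k Hinc (k - S i)). lia.
  - intros y Hy. apply Hmq. lra.
Qed.

Lemma piece_left f x : PL0 f -> 0 < x <= 1 ->
  exists e m q, 0 <= e < x /\ forall y, e <= y <= x -> f y = m * y + q.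
Proof.
  intros [_ [_ [_ [k [t [H0 [Hk [Hinc Haff]]]]]]]] Hx.
  destruct (part_left t k x H0 Hinc ltac:(lra) k (Nat.le_refl k) ltac:(lra)) as [i [Hi Hti]].
  destruct (Haff i Hi) as [m [q Hmq]].
  exists (t i), m, q. split.
  - split; [|lra]. apply (part_ge0 t k H0 Hinc). lia.
  - intros y Hy. apply Hmq. lra.
Qed.

Lemma small_mul (M D eps : R) : 0 <= M -> 0 <= D -> eps > 0 -> D < eps / (M + 1) -> M * D < eps.
Proof.
  intros HM HD He HDe.
  assert (Hq : eps / (M + 1) * (M + 1) = eps) by (field; lra).
  assert (D * (M+1) < eps / (M+1) * (M+1)) by (apply Rmult_lt_compat_r; lra).
  nra.
Qed.

Definition cont_I (f : R -> R) (x : R) : Prop :=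
  forall eps, eps > 0 -> exists delta, delta > 0 /\
    forall w, 0 <= w <= 1 -> Rabs (w - x) < delta -> Rabs (f w - f x) < eps.

Lemma cont_right f x eps : PL0 f -> 0 <= x <= 1 -> eps > 0 ->
  exists d, d > 0 /\ forall w, x <= w <= 1 -> w - x < d -> Rabs (f w - f x) < eps.
Proof.
  intros Hf Hx He. destruct (Rlt_or_le x 1) as [h|h].
  - destruct (piece_right f x Hf ltac:(lra)) as [e [m [q [He' Hmq]]]].
    assert (Hm : 0 <= Rabs m) by apply Rabs_pos.
    exists (Rmin (e - x) (eps / (Rabs m + 1))). split.
    + apply Rmin_pos; [lra|]. apply Rdiv_lt_0_compat; lra.
    + intros w Hw Hwd.
      assert (Hw1 := Rmin_l (e - x) (eps / (Rabs m + 1))).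
      assert (Hw2 := Rmin_r (e - x) (eps / (Rabs m + 1))).
      rewrite (Hmq w) by lra. rewrite (Hmq x) by lra.
      replace (m * w + q - (m * x + q)) with (m * (w - x)) by ring.
      rewrite Rabs_mult. rewrite (Rabs_pos_eq (w - x)) by lra.
      apply small_mul; lra.
  - exists 1. split; [lra|]. intros w Hw _.
    replace w with x by lra. replace (f x - f x) with 0 by ring. rewrite Rabs_R0. lra.
Qed.

Lemma cont_left f x eps : PL0 f -> 0 <= x <= 1 -> eps > 0 ->
  exists d, d > 0 /\ forall w, 0 <= w <= x -> x - w < d -> Rabs (f w - f x) < eps.
Proof.
  intros Hf Hx He. destruct (Rlt_or_le 0 x) as [h|h].
  - destruct (piece_left f x Hf ltac:(lra)) as [e [m [q [He' Hmq]]]].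
    assert (Hm : 0 <= Rabs m) by apply Rabs_pos.
    exists (Rmin (x - e) (eps / (Rabs m + 1))). split.
    + apply Rmin_pos; [lra|]. apply Rdiv_lt_0_compat; lra.
    + intros w Hw Hwd.
      assert (Hw1 := Rmin_l (x - e) (eps / (Rabs m + 1))).
      assert (Hw2 := Rmin_r (x - e) (eps / (Rabs m + 1))).
      rewrite (Hmq w) by lra. rewrite (Hmq x) by lra.
      replace (m * w + q - (m * x + q)) with (- (m * (x - w))) by ring.
      rewrite Rabs_Ropp, Rabs_mult. rewrite (Rabs_pos_eq (x - w)) by lra.
      apply small_mul; lra.
  - exists 1. split; [lra|]. intros w Hw _.
    replace w with x by lra. replace (f x - f x) with 0 by ring. rewrite Rabs_R0. lra.
Qed.

Lemma PL0_cont f x : PL0 f -> 0 <= x <= 1 -> cont_I f x.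
Proof.
  intros Hf Hx eps He.
  destruct (cont_right f x eps Hf Hx He) as [d1 [Hd1 H1]].
  destruct (cont_left f x eps Hf Hx He) as [d2 [Hd2 H2]].
  exists (Rmin d1 d2). split; [apply Rmin_pos; lra|].
  intros w Hw Hwd. apply Rabs_def2 in Hwd.
  assert (Hm1 := Rmin_l d1 d2). assert (Hm2 := Rmin_r d1 d2).
  destruct (Rle_or_lt x w).
  - apply H1; lra.
  - apply H2; lra.
Qed.

Lemma id_cont x : cont_I (fun s => s) x.
Proof.
  intros eps He. exists eps. split; [lra|]. intros w _ H; exact H.
Qed.

Lemma CL_eq F G x : cont_I F x -> cont_I G x ->
  (forall d, d > 0 -> exists w, 0 <= w <= 1 /\ Rabs (w - x) < d /\ F w = G w) ->
  F x = G x.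
Proof.
  intros HF HG H. destruct (Req_dec (F x) (G x)) as [e|ne]; [exact e|exfalso].
  set (D := F x - G x).
  assert (HD : Rabs D > 0) by (apply Rabs_pos_lt; unfold D; lra).
  destruct (HF (Rabs D / 2) ltac:(lra)) as [d1 [Hd1 H1]].
  destruct (HG (Rabs D / 2) ltac:(lra)) as [d2 [Hd2 H2]].
  destruct (H (Rmin d1 d2) ltac:(apply Rmin_pos; lra)) as [w [Hw [Hwx Heq]]].
  assert (Hm1 := Rmin_l d1 d2). assert (Hm2 := Rmin_r d1 d2).
  specialize (H1 w Hw ltac:(lra)). specialize (H2 w Hw ltac:(lra)).
  apply Rabs_def2 in H1. apply Rabs_def2 in H2.
  assert (Rabs D < Rabs D). { apply Rabs_def1; unfold D in *; lra. } lra.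
Qed.

Lemma CL_le F x y : cont_I F x ->
  (forall d, d > 0 -> exists w, 0 <= w <= 1 /\ Rabs (w - x) < d /\ F w <= y) ->
  F x <= y.
Proof.
  intros HF H. destruct (Rle_or_lt (F x) y) as [h|h]; [exact h|exfalso].
  destruct (HF (F x - y) ltac:(lra)) as [d1 [Hd1 H1]].
  destruct (H d1 Hd1) as [w [Hw [Hwx Hle]]].
  specialize (H1 w Hw Hwx). apply Rabs_def2 in H1. lra.
Qed.

Lemma CL_ge F x y : cont_I F x ->
  (forall d, d > 0 -> exists w, 0 <= w <= 1 /\ Rabs (w - x) < d /\ y <= F w) ->
  y <= F x.
Proof.
  intros HF H. destruct (Rle_or_lt y (F x)) as [h|h]; [exact h|exfalso].
  destruct (HF (y - F x) ltac:(lra)) as [d1 [Hd1 H1]].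
  destruct (H d1 Hd1) as [w [Hw [Hwx Hle]]].
  specialize (H1 w Hw Hwx). apply Rabs_def2 in H1. lra.
Qed.

Lemma lub_ex (E : R -> Prop) : (exists z, E z) -> (exists U, forall z, E z -> z <= U) ->
  exists m, (forall z, E z -> z <= m) /\ (forall d, d > 0 -> exists z, E z /\ m - d < z).
Proof.
  intros Hne [U HU].
  destruct (completeness E (ex_intro _ U HU) Hne) as [m [Hub Hl]].
  exists m. split; [exact Hub|].
  intros d Hd. apply NNPP. intro Hn.
  assert (m <= m - d); [|lra].
  apply Hl. intros z Hz. destruct (Rle_or_lt z (m - d)) as [h|h]; [exact h|].
  exfalso; apply Hn; eauto.
Qed.

Lemma glb_ex (E : R -> Prop) : (exists z, E z) -> (exists L, forall z, E z -> L <= z) ->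
  exists m, (forall z, E z -> m <= z) /\ (forall d, d > 0 -> exists z, E z /\ z < m + d).
Proof.
  intros [z0 Hz0] [L HL].
  destruct (lub_ex (fun w => E (- w))) as [m [Hub Ha]].
  - exists (- z0). rewrite Ropp_involutive. exact Hz0.
  - exists (- L). intros w Hw. specialize (HL _ Hw). lra.
  - exists (- m). split.
    + intros z Hz. assert (- z <= m); [apply Hub; rewrite Ropp_involutive; exact Hz|lra].
    + intros d Hd. destruct (Ha d Hd) as [w [Hw Hwl]]. exists (- w). split; [exact Hw|lra].
Qed.

Lemma f_lt f x y : PL0 f -> 0 <= x -> x < y -> y <= 1 -> f x < f y.
Proof. intros [_ [_ [H _]]]; apply H. Qed.

Lemma f_le f x y : PL0 f -> 0 <= x -> x <= y -> y <= 1 -> f x <= f y.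
Proof. intros Hf ? [h|h] ?. - left; apply (f_lt f); auto. - subst; lra. Qed.

Lemma f_in f x : PL0 f -> 0 <= x <= 1 -> 0 <= f x <= 1.
Proof.
  intros Hf Hx. pose proof Hf as [H0 [H1 _]].
  split.
  - rewrite <- H0. apply (f_le f); auto; lra.
  - rewrite <- H1. apply (f_le f); auto; lra.
Qed.

Lemma f_lt_rev f x y : PL0 f -> 0 <= x <= 1 -> 0 <= y <= 1 -> f x < f y -> x < y.
Proof.
  intros Hf Hx Hy H. destruct (Rlt_or_le x y) as [h|h]; [exact h|].
  assert (f y <= f x) by (apply (f_le f); auto; lra). lra.
Qed.

Lemma surj f y : PL0 f -> 0 <= y <= 1 -> exists x, 0 <= x <= 1 /\ f x = y.
Proof.
  intros Hf Hy. pose proof Hf as [H0 [H1 _]].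
  destruct (lub_ex (fun x => 0 <= x <= 1 /\ f x <= y)) as [m [Hub Ha]].
  - exists 0. split; lra.
  - exists 1. intros z Hz; lra.
  - assert (Hm0 : 0 <= m) by (apply Hub; split; lra).
    assert (Hm1 : m <= 1).
    { destruct (Rle_or_lt m 1) as [h|h]; [exact h|].
      destruct (Ha (m - 1) ltac:(lra)) as [z [Hz Hz2]]. lra. }
    exists m. split; [lra|]. apply Rle_antisym.
    + apply CL_le; [apply PL0_cont; auto; lra|].
      intros d Hd. destruct (Ha d Hd) as [z [Hz Hz2]]. exists z.
      assert (z <= m) by (apply Hub; auto).
      split; [lra|]. split; [|tauto]. apply Rabs_def1; lra.
    + destruct (Req_dec m 1) as [e|ne]. { subst m. lra. }
      apply CL_ge; [apply PL0_cont; auto; lra|].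
      intros d Hd. exists (m + Rmin (d/2) (1 - m)).
      assert (Hp : 0 < Rmin (d/2) (1 - m)) by (apply Rmin_pos; lra).
      assert (Hm1' := Rmin_l (d/2) (1 - m)). assert (Hm2 := Rmin_r (d/2) (1 - m)).
      split; [lra|]. split. { apply Rabs_def1; lra. }
      destruct (Rle_or_lt (f (m + Rmin (d / 2) (1 - m))) y) as [h|h]; [|lra].
      assert (m + Rmin (d / 2) (1 - m) <= m) by (apply Hub; split; [lra|exact h]). lra.
Qed.

Lemma g_in f g y : PL0 f -> inverse_on_I f g -> 0 <= y <= 1 -> 0 <= g y <= 1.
Proof.
  intros Hf Hg Hy. destruct (surj f y Hf Hy) as [x [Hx Hfx]].
  subst y. rewrite (proj1 (Hg x Hx)). exact Hx.
Qed.

Lemma g_lt f g x y : PL0 f -> inverse_on_I f g -> 0 <= x -> x < y -> y <= 1 -> g x < g y.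
Proof.
  intros Hf Hg ? ? ?.
  assert (Hx := g_in f g x Hf Hg ltac:(lra)). assert (Hy := g_in f g y Hf Hg ltac:(lra)).
  apply (f_lt_rev f); auto.
  rewrite (proj2 (Hg x ltac:(lra))), (proj2 (Hg y ltac:(lra))). lra.
Qed.

Lemma g_le f g x y : PL0 f -> inverse_on_I f g -> 0 <= x -> x <= y -> y <= 1 -> g x <= g y.
Proof. intros Hf Hg ? [h|h] ?. - left; apply (g_lt f g); auto. - subst; lra. Qed.

Lemma nsupp f u : 0 <= u <= 1 -> ~ in_supp f u -> f u = u.
Proof.
  intros Hu H. destruct (Req_dec (f u) u) as [e|ne]; auto. exfalso; apply H; split; auto.
Qed.

Lemma fix_orb f s : PL0 f -> 0 <= s <= 1 -> f s <> s ->
  exists u v, orbital f u v /\ u < s < v.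
Proof.
  intros Hf Hs Hfs. pose proof Hf as [H0 [H1 _]].
  destruct (lub_ex (fun z => 0 <= z <= s /\ f z = z)) as [u [Hub Ha]].
  { exists 0. split; [lra|auto]. }
  { exists s. intros z Hz; lra. }
  destruct (glb_ex (fun z => s <= z <= 1 /\ f z = z)) as [v [Hlb Hb]].
  { exists 1. split; [lra|auto]. }
  { exists s. intros z Hz; lra. }
  assert (Hu0 : 0 <= u) by (apply Hub; split; [lra|auto]).
  assert (Hus : u <= s).
  { destruct (Rle_or_lt u s) as [h|h]; [exact h|].
    destruct (Ha (u - s) ltac:(lra)) as [z [Hz Hz2]]. lra. }
  assert (Hv1 : v <= 1) by (apply Hlb; split; [lra|auto]).
  assert (Hvs : s <= v).
  { destruct (Rle_or_lt s v) as [h|h]; [exact h|].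
    destruct (Hb (s - v) ltac:(lra)) as [z [Hz Hz2]]. lra. }
  assert (Hfu : f u = u).
  { apply (CL_eq f (fun s => s)); [apply PL0_cont; auto; lra|apply id_cont|].
    intros d Hd. destruct (Ha d Hd) as [z [Hz Hz2]]. exists z.
    assert (z <= u) by (apply Hub; auto).
    split; [lra|]. split; [apply Rabs_def1; lra|tauto]. }
  assert (Hfv : f v = v).
  { apply (CL_eq f (fun s => s)); [apply PL0_cont; auto; lra|apply id_cont|].
    intros d Hd. destruct (Hb d Hd) as [z [Hz Hz2]]. exists z.
    assert (v <= z) by (apply Hlb; auto).
    split; [lra|]. split; [apply Rabs_def1; lra|tauto]. }
  assert (u <> s) by (intro; subst; auto).
  assert (v <> s) by (intro; subst; auto).
  exists u, v. split; [|lra].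
  split; [lra|]. split; [lra|]. split; [lra|]. split; [|split].
  - intros x Hx. split; [lra|]. intro Hfx.
    destruct (Rle_or_lt x s).
    + assert (x <= u) by (apply Hub; split; [lra|auto]). lra.
    + assert (v <= x) by (apply Hlb; split; [lra|auto]). lra.
  - intros [_ h]; auto.
  - intros [_ h]; auto.
Qed.

Lemma comm_gen (X Xi Y Yi : R -> R) (A B : R -> Prop) t :
  (A t \/ B t) ->
  (forall s, B s -> X s = s) -> (forall s, B s -> Xi s = s) ->
  (forall s, A s -> Y s = s) -> (forall s, A s -> Yi s = s) ->
  (forall s, A s -> A (X s)) -> (forall s, B s -> B (Y s)) ->
  (forall s, A s -> Xi (X s) = s) -> (forall s, B s -> Yi (Y s) = s) ->
  Yi (Xi (Y (X t))) = t.
Proof.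
  intros [HA|HB] H1 H2 H3 H4 H5 H6 H7 H8.
  - rewrite (H3 _ (H5 _ HA)), (H7 _ HA), (H4 _ HA). reflexivity.
  - rewrite (H1 _ HB), (H2 _ (H6 _ HB)), (H8 _ HB). reflexivity.
Qed.

Lemma order_bd (b d : nat -> R) n :
  (forall i, (i < n)%nat -> b i < d i) ->
  (forall i, (S i < n)%nat -> d i <= b (S i)) ->
  forall i j, (i + j < n)%nat -> b i <= b (i + j)%nat /\ d i <= d (i + j)%nat.
Proof.
  intros Hbd Hdb i j. induction j as [|j IH]; intros Hij.
  - rewrite Nat.add_0_r. lra.
  - destruct (IH ltac:(lia)) as [h1 h2].
    replace (i + S j)%nat with (S (i + j)) by lia.
    assert (d (i + j)%nat <= b (S (i + j))) by (apply Hdb; lia).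
    assert (b (i+j)%nat < d (i+j)%nat) by (apply Hbd; lia).
    assert (b (S (i+j)) < d (S (i+j))) by (apply Hbd; lia). lra.
Qed.

Lemma inv_f f g x : inverse_on_I f g -> 0 <= x <= 1 -> g (f x) = x.
Proof. intros H Hx; apply (H x Hx). Qed.
Lemma inv_g f g x : inverse_on_I f g -> 0 <= x <= 1 -> f (g x) = x.
Proof. intros H Hx; apply (H x Hx). Qed.

Lemma XiX f0 f1 g0 g1 t : PL0 f0 -> inverse_on_I f0 g0 -> inverse_on_I f1 g1 ->
  0 <= t <= 1 -> g0 (f1 (g1 (f0 t))) = t.
Proof.
  intros Hf0 Hg0 Hg1 Ht. assert (H := f_in f0 t Hf0 Ht).
  rewrite (inv_g f1 g1) by auto. apply (inv_f f0 g0); auto.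
Qed.

Lemma YiY f0 f1 g0 g1 t : PL0 f0 -> PL0 f1 -> inverse_on_I f0 g0 -> inverse_on_I f1 g1 ->
  0 <= t <= 1 ->
  f0 (f0 (g1 (g0 (g0 (f0 (f0 (f1 (g0 (g0 t))))))))) = t.
Proof.
  intros Hf0 Hf1 Hg0 Hg1 Ht.
  assert (h1 := g_in f0 g0 t Hf0 Hg0 Ht).
  assert (h2 := g_in f0 g0 _ Hf0 Hg0 h1).
  assert (h3 := f_in f1 _ Hf1 h2).
  assert (h4 := f_in f0 _ Hf0 h3).
  rewrite (inv_f f0 g0 (f0 (f1 _))) by auto.
  rewrite (inv_f f0 g0 (f1 _)) by auto.
  rewrite (inv_f f1 g1) by auto.
  rewrite (inv_g f0 g0) by auto. apply (inv_g f0 g0); auto.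
Qed.

Lemma up_case (f0 f1 g0 g1 : R -> R) (a c : R) (n : nat) (b d : nat -> R) :
  PL0 f0 -> PL0 f1 ->
  inverse_on_I f0 g0 -> inverse_on_I f1 g1 ->
  orbital f0 a c ->
  (forall u v, orbital f1 u v ->
     (a <= u /\ v <= c) \/ (v <= a \/ c <= u)) ->
  (1 <= n)%nat ->
  (forall i, (i < n)%nat -> orbital f1 (b i) (d i) /\ a <= b i /\ d i <= c) ->
  (forall i, (S i < n)%nat -> d i <= b (S i)) ->
  (forall u v, orbital f1 u v -> a <= u -> v <= c ->
     exists i, (i < n)%nat /\ u = b i /\ v = d i) ->
  (up_bump f0 a c /\
     a < b 0%nat /\
     (exists p, 0 <= p /\ p < c /\ agree_on f0 f1 p c) /\
     d (pred n) = c /\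
     (forall p, 0 <= p -> p < c -> agree_on f0 f1 p c ->
        (forall q, 0 <= q -> q < c -> agree_on f0 f1 q c -> p <= q) ->
        f0 (b (pred n)) >= p) /\
     f0 (b 0%nat) > b (pred n)) ->
  forall t, a <= t <= c ->
    comm_act (fun s => g1 (f0 s))
             (fun s => g0 (f1 s))
             (fun s => f0 (f0 (f1 (g0 (g0 s)))))
             (fun s => f0 (f0 (g1 (g0 (g0 s)))))
             t = t.
Proof.
  intros Hf0 Hf1 Hg0 Hg1 Horb Hdich Hn Hbi Hdb Hall
    [[_ Hup] [Hab0 [[p0 [Hp0 [Hp0c Hagp0]]] [Hdn [Hmin Hfb0]]]]] t Ht.
  destruct Horb as [Ha0 [Hac [Hc1 [_ [Hna Hnc]]]]].
  assert (fa : f0 a = a) by (apply nsupp; auto; lra).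
  assert (fc : f0 c = c) by (apply nsupp; auto; lra).
  set (N := pred n).
  assert (HN : (N < n)%nat) by (unfold N; lia).
  assert (Hord : forall i, (i < n)%nat -> b i < d i).
  { intros i Hi. destruct (Hbi i Hi) as [[_ [h _]] _]. exact h. }
  destruct (Hbi 0%nat ltac:(lia)) as [[_ [Hbd0 _]] [_ Hd0c]].
  assert (HbN : b 0%nat <= b N).
  { destruct (order_bd b d n Hord Hdb 0%nat N ltac:(lia)) as [h _]. exact h. }
  destruct (glb_ex (fun q => 0 <= q < c /\ agree_on f0 f1 q c)) as [pm [Hlb Happ]].
  { exists p0. auto. }
  { exists 0. intros z Hz; lra. }
  assert (Hpm0 : 0 <= pm).
  { destruct (Rle_or_lt 0 pm) as [h|h]; [exact h|].
    destruct (Happ (- pm) ltac:(lra)) as [z [Hz Hz2]]. lra. }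
  assert (Hpmc : pm < c).
  { assert (pm <= p0) by (apply Hlb; auto). lra. }
  assert (Hagpm : agree_on f0 f1 pm c).
  { intros x Hx. destruct (Req_dec x pm) as [e|ne].
    - subst x. apply CL_eq; [apply PL0_cont; auto; lra|apply PL0_cont; auto; lra|].
      intros dd Hdd. destruct (Happ dd Hdd) as [z [[Hz1 Hz2] Hz3]].
      assert (pm <= z) by (apply Hlb; auto).
      exists z. split; [lra|]. split; [apply Rabs_def1; lra|]. apply Hz2; lra.
    - destruct (Happ (x - pm) ltac:(lra)) as [z [[Hz1 Hz2] Hz3]].
      apply Hz2; lra. }
  assert (HfbN : f0 (b N) >= pm).
  { apply Hmin; auto; intros q Hq Hqc Hagq; apply Hlb; auto. }
  assert (HA : forall s, pm <= s <= c -> f0 s = f1 s) by (intros s Hs; apply Hagpm; lra).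
  assert (HB : forall s, a <= s < b 0%nat -> f1 s = s).
  { intros s Hs. destruct (Req_dec (f1 s) s) as [e|ne]; [exact e|exfalso].
    destruct (fix_orb f1 s Hf1 ltac:(lra) ne) as [u [v [Huv [Hus Hsv]]]].
    destruct (Hdich u v Huv) as [[Hau Hvc]|[Hva|Hcu]]; [|lra|lra].
    destruct (Hall u v Huv Hau Hvc) as [i [Hi [Hu Hv]]].
    destruct (order_bd b d n Hord Hdb 0%nat i ltac:(lia)) as [h _].
    simpl in h. lra. }
  assert (f1a : f1 a = a) by (apply HB; lra).
  set (b0 := b 0%nat) in *.
  assert (Hb0c : b0 < c) by lra.
  assert (Hfb0x : b0 < f0 b0) by (apply Hup; lra).
  assert (Hfb0c : f0 b0 < c) by (rewrite <- fc; apply (f_lt f0); auto; lra).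
  assert (HF : f0 b0 < f0 (f0 b0)) by (apply Hup; lra).
  assert (HF2 : f0 (b N) < f0 (f0 b0)) by (apply (f_lt f0); auto; lra).
  set (P := Rmax a pm).
  assert (HaP : a <= P) by apply Rmax_l.
  assert (HpmP : pm <= P) by apply Rmax_r.
  assert (HPF : P < f0 (f0 b0)) by (apply Rmax_lub_lt; lra).
  assert (HPc : P < c) by (apply Rmax_lub_lt; lra).
  assert (HF1 : f0 (f0 b0) <= 1).
  { assert (h := f_in f0 (f0 b0) Hf0 ltac:(lra)). lra. }
  assert (ga : g0 a = a) by (rewrite <- fa at 1; apply (inv_f f0 g0); auto; lra).
  assert (gc : g0 c = c) by (rewrite <- fc at 1; apply (inv_f f0 g0); auto; lra).
  assert (HgP1 : g0 P < f0 b0).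
  { rewrite <- (inv_f f0 g0 (f0 b0)) by (auto; lra). apply (g_lt f0 g0); auto; lra. }
  assert (HgPa : a <= g0 P) by (rewrite <- ga; apply (g_le f0 g0); auto; lra).
  assert (HgP2 : g0 (g0 P) < b0).
  { rewrite <- (inv_f f0 g0 b0) by (auto; lra). apply (g_lt f0 g0); auto; lra. }
  assert (HgPa2 : a <= g0 (g0 P)) by (rewrite <- ga; apply (g_le f0 g0); auto; lra).
  assert (Hg0in : forall s, a <= s <= c -> a <= g0 s <= c).
  { intros s Hs. split.
    - rewrite <- ga at 1; apply (g_le f0 g0); auto; lra.
    - rewrite <- gc; apply (g_le f0 g0); auto; lra. }
  assert (Hf0in : forall s, a <= s <= c -> a <= f0 s <= c).
  { intros s Hs. split.
    - rewrite <- fa at 1; apply (f_le f0); auto; lra.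
    - rewrite <- fc; apply (f_le f0); auto; lra. }
  unfold comm_act.
  apply (comm_gen (fun s => g1 (f0 s)) (fun s => g0 (f1 s))
             (fun s => f0 (f0 (f1 (g0 (g0 s)))))
             (fun s => f0 (f0 (g1 (g0 (g0 s))))) (fun s => a <= s <= P) (fun s => P <= s <= c) t);
  cbv beta.
  - destruct (Rle_or_lt t P); [left|right]; lra.
  - intros s Hs. rewrite HA by lra. apply (inv_f f1 g1); auto; lra.
  - intros s Hs. rewrite <- HA by lra. apply (inv_f f0 g0); auto; lra.
  - intros s Hs. assert (h1 := Hg0in s ltac:(lra)).
    assert (h2 : g0 (g0 s) <= g0 (g0 P)).
    { apply (g_le f0 g0); auto; try lra. apply (g_le f0 g0); auto; lra. }
    assert (h3 := Hg0in _ h1).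
    rewrite HB by lra. rewrite (inv_g f0 g0) by (auto; lra). apply (inv_g f0 g0); auto; lra.
  - intros s Hs. assert (h1 := Hg0in s ltac:(lra)).
    assert (h2 : g0 (g0 s) <= g0 (g0 P)).
    { apply (g_le f0 g0); auto; try lra. apply (g_le f0 g0); auto; lra. }
    assert (h3 := Hg0in _ h1).
    assert (E : g1 (f1 (g0 (g0 s))) = g0 (g0 s)) by (apply (inv_f f1 g1); auto; lra).
    rewrite HB in E by lra. rewrite E.
    rewrite (inv_g f0 g0) by (auto; lra). apply (inv_g f0 g0); auto; lra.
  - intros s Hs. assert (h1 := Hf0in s ltac:(lra)). split.
    + assert (ga1 : g1 a = a) by (rewrite <- f1a at 1; apply (inv_f f1 g1); auto; lra).
      rewrite <- ga1 at 1. apply (g_le f1 g1); auto; lra.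
    + rewrite <- (inv_f f1 g1 P) by (auto; lra). rewrite <- HA by lra.
      apply (g_le f1 g1); auto; try lra. apply (f_le f0); auto; lra. assert (h5 := Hf0in P ltac:(lra)); lra.
  - intros s Hs. assert (h1 := Hg0in s ltac:(lra)). assert (h3 := Hg0in _ h1).
    assert (h2 : g0 (g0 P) <= g0 (g0 s)).
    { apply (g_le f0 g0); auto; try lra. apply (g_le f0 g0); auto; lra. }
    assert (f1c : f1 c = c) by (rewrite <- HA; lra).
    assert (k1 : g0 (g0 P) <= f1 (g0 (g0 s)) <= c).
    { split.
      - rewrite <- (HB (g0 (g0 P))) at 1 by lra. apply (f_le f1); auto; lra.
      - rewrite <- f1c. apply (f_le f1); auto; lra. }
    split.
    + rewrite <- (inv_g f0 g0 P) at 1 by (auto; lra).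
      rewrite <- (inv_g f0 g0 (g0 P)) at 1 by (auto; lra).
      assert (q1 := Hf0in (g0 (g0 P)) ltac:(lra)).
      assert (q2 := Hf0in (f1 (g0 (g0 s))) ltac:(lra)).
      assert (q3 : f0 (g0 (g0 P)) <= f0 (f1 (g0 (g0 s)))) by (apply (f_le f0); auto; lra).
      apply (f_le f0); auto; lra.
    + assert (k2 := Hf0in (f1 (g0 (g0 s))) ltac:(lra)). apply (Hf0in _ k2).
  - intros s Hs. apply XiX; auto; lra.
  - intros s Hs. apply YiY; auto; lra.
Qed.

Lemma down_case (f0 f1 g0 g1 : R -> R) (a c : R) (n : nat) (b d : nat -> R) :
  PL0 f0 -> PL0 f1 ->
  inverse_on_I f0 g0 -> inverse_on_I f1 g1 ->
  orbital f0 a c ->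
  (forall u v, orbital f1 u v ->
     (a <= u /\ v <= c) \/ (v <= a \/ c <= u)) ->
  (1 <= n)%nat ->
  (forall i, (i < n)%nat -> orbital f1 (b i) (d i) /\ a <= b i /\ d i <= c) ->
  (forall i, (S i < n)%nat -> d i <= b (S i)) ->
  (forall u v, orbital f1 u v -> a <= u -> v <= c ->
     exists i, (i < n)%nat /\ u = b i /\ v = d i) ->
    (down_bump f0 a c /\
     d (pred n) < c /\
     (exists rho, a < rho /\ rho <= 1 /\ agree_on f0 f1 a rho) /\
     b 0%nat = a /\
     (forall rho, a < rho -> rho <= 1 -> agree_on f0 f1 a rho ->
        (forall q, a < q -> q <= 1 -> agree_on f0 f1 a q -> q <= rho) ->
        f0 (d 0%nat) <= rho) /\
     f0 (d (pred n)) < d 0%nat) ->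
  forall t, a <= t <= c ->
    comm_act (fun s => g1 (f0 s))
             (fun s => g0 (f1 s))
             (fun s => f0 (f0 (f1 (g0 (g0 s)))))
             (fun s => f0 (f0 (g1 (g0 (g0 s)))))
             t = t.
Proof.
  intros Hf0 Hf1 Hg0 Hg1 Horb Hdich Hn Hbi Hdb Hall
    [[_ Hdown] [HdNc [[r0 [Hr0 [Hr01 Hagr0]]] [Hb0 [Hmax Hfdn]]]]] t Ht.
  destruct Horb as [Ha0 [Hac [Hc1 [_ [Hna Hnc]]]]].
  assert (fa : f0 a = a) by (apply nsupp; auto; lra).
  assert (fc : f0 c = c) by (apply nsupp; auto; lra).
  set (N := pred n) in *.
  assert (HN : (N < n)%nat) by (unfold N; lia).
  assert (Hord : forall i, (i < n)%nat -> b i < d i).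
  { intros i Hi. destruct (Hbi i Hi) as [[_ [h _]] _]. exact h. }
  destruct (Hbi 0%nat ltac:(lia)) as [[_ [Hbd0 _]] [_ Hd0c]].
  assert (HbN : b 0%nat <= b N /\ d 0%nat <= d N).
  { destruct (order_bd b d n Hord Hdb 0%nat N ltac:(lia)) as [h h']. auto. }
  assert (HbdN : b N < d N) by (apply Hord; auto).
  destruct (lub_ex (fun q => a < q <= 1 /\ agree_on f0 f1 a q)) as [rm [Hub Happ]].
  { exists r0. auto. }
  { exists 1. intros z Hz; lra. }
  assert (Hrm1 : rm <= 1).
  { destruct (Rle_or_lt rm 1) as [h|h]; [exact h|].
    destruct (Happ (rm - 1) ltac:(lra)) as [z [Hz Hz2]]. lra. }
  assert (Hrma : r0 <= rm) by (apply Hub; auto).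
  assert (Hagrm : agree_on f0 f1 a rm).
  { intros x Hx. destruct (Req_dec x rm) as [e|ne].
    - subst x. apply CL_eq; [apply PL0_cont; auto; lra|apply PL0_cont; auto; lra|].
      intros dd Hdd. destruct (Happ dd Hdd) as [z [[Hz1 Hz2] Hz3]].
      assert (z <= rm) by (apply Hub; auto).
      exists z. split; [lra|]. split; [apply Rabs_def1; lra|]. apply Hz2; lra.
    - destruct (Happ (rm - x) ltac:(lra)) as [z [[Hz1 Hz2] Hz3]].
      apply Hz2; lra. }
  assert (Hfd0 : f0 (d 0%nat) <= rm).
  { apply Hmax; auto; try lra; intros q Hq Hq1 Hagq; apply Hub; auto. }
  assert (HA : forall s, a <= s <= rm -> f0 s = f1 s) by (intros s Hs; apply Hagrm; lra).
  assert (HB : forall s, d N < s <= c -> f1 s = s).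
  { intros s Hs. destruct (Req_dec (f1 s) s) as [e|ne]; [exact e|exfalso].
    destruct (fix_orb f1 s Hf1 ltac:(lra) ne) as [u [v [Huv [Hus Hsv]]]].
    destruct (Hdich u v Huv) as [[Hau Hvc]|[Hva|Hcu]]; [|lra|lra].
    destruct (Hall u v Huv Hau Hvc) as [i [Hi [Hu Hv]]].
    destruct (order_bd b d n Hord Hdb i (N - i) ltac:(lia)) as [_ h].
    replace (i + (N - i))%nat with N in h by lia. lra. }
  assert (f1c : f1 c = c) by (apply HB; lra).
  set (dN := d N) in *.
  assert (HdNa : a < dN) by lra.
  assert (Hfdn1 : f0 dN < dN) by (apply Hdown; lra).
  assert (Hfdn2 : a < f0 dN) by (rewrite <- fa at 1; apply (f_lt f0); auto; lra).
  assert (HF : f0 (f0 dN) < f0 (d 0%nat)) by (apply (f_lt f0); auto; lra).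
  assert (HF' : f0 (f0 dN) < f0 dN) by (apply Hdown; lra).
  assert (HF0 : a < f0 (f0 dN)) by (rewrite <- fa at 1; apply (f_lt f0); auto; lra).
  set (R := Rmin c rm).
  assert (HRc : R <= c) by apply Rmin_l.
  assert (HRrm : rm >= R) by (apply Rle_ge, Rmin_r).
  assert (HFR : f0 (f0 dN) < R) by (apply Rmin_glb_lt; lra).
  assert (HaR : a < R) by (apply Rmin_glb_lt; lra).
  assert (ga : g0 a = a) by (rewrite <- fa at 1; apply (inv_f f0 g0); auto; lra).
  assert (gc : g0 c = c) by (rewrite <- fc at 1; apply (inv_f f0 g0); auto; lra).
  assert (Hg0in : forall s, a <= s <= c -> a <= g0 s <= c).
  { intros s Hs. split.
    - rewrite <- ga at 1; apply (g_le f0 g0); auto; lra.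
    - rewrite <- gc; apply (g_le f0 g0); auto; lra. }
  assert (Hf0in : forall s, a <= s <= c -> a <= f0 s <= c).
  { intros s Hs. split.
    - rewrite <- fa at 1; apply (f_le f0); auto; lra.
    - rewrite <- fc; apply (f_le f0); auto; lra. }
  assert (HgR1 : f0 dN < g0 R).
  { rewrite <- (inv_f f0 g0 (f0 dN)) by (auto; lra). apply (g_lt f0 g0); auto; lra. }
  assert (HgRc := Hg0in R ltac:(lra)).
  assert (HgR2 : dN < g0 (g0 R)).
  { rewrite <- (inv_f f0 g0 dN) at 1 by (auto; lra). apply (g_lt f0 g0); auto; lra. }
  assert (HgRc2 := Hg0in (g0 R) ltac:(lra)).
  unfold comm_act.
  apply (comm_gen (fun s => g1 (f0 s)) (fun s => g0 (f1 s))
             (fun s => f0 (f0 (f1 (g0 (g0 s)))))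
             (fun s => f0 (f0 (g1 (g0 (g0 s))))) (fun s => R <= s <= c) (fun s => a <= s <= R) t);
  cbv beta.
  - destruct (Rle_or_lt t R); [right|left]; lra.
  - intros s Hs. rewrite HA by lra. apply (inv_f f1 g1); auto; lra.
  - intros s Hs. rewrite <- HA by lra. apply (inv_f f0 g0); auto; lra.
  - intros s Hs. assert (h1 := Hg0in s ltac:(lra)).
    assert (h2 : g0 (g0 R) <= g0 (g0 s)).
    { apply (g_le f0 g0); auto; try lra. apply (g_le f0 g0); auto; lra. }
    assert (h3 := Hg0in _ h1).
    rewrite HB by lra. rewrite (inv_g f0 g0) by (auto; lra). apply (inv_g f0 g0); auto; lra.
  - intros s Hs. assert (h1 := Hg0in s ltac:(lra)).
    assert (h2 : g0 (g0 R) <= g0 (g0 s)).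
    { apply (g_le f0 g0); auto; try lra. apply (g_le f0 g0); auto; lra. }
    assert (h3 := Hg0in _ h1).
    assert (E : g1 (f1 (g0 (g0 s))) = g0 (g0 s)) by (apply (inv_f f1 g1); auto; lra).
    rewrite HB in E by lra. rewrite E.
    rewrite (inv_g f0 g0) by (auto; lra). apply (inv_g f0 g0); auto; lra.
  - intros s Hs. assert (h1 := Hf0in s ltac:(lra)). split.
    + rewrite <- (inv_f f1 g1 R) at 1 by (auto; lra). rewrite <- HA by lra.
      assert (h5 := Hf0in R ltac:(lra)).
      apply (g_le f1 g1); auto; try lra. apply (f_le f0); auto; lra.
    + assert (gc1 : g1 c = c) by (rewrite <- f1c at 1; apply (inv_f f1 g1); auto; lra).
      rewrite <- gc1. apply (g_le f1 g1); auto; lra.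
  - intros s Hs. assert (h1 := Hg0in s ltac:(lra)). assert (h3 := Hg0in _ h1).
    assert (h2 : g0 (g0 s) <= g0 (g0 R)).
    { apply (g_le f0 g0); auto; try lra. apply (g_le f0 g0); auto; lra. }
    assert (f1a : f1 a = a) by (rewrite <- HA; lra).
    assert (k1 : a <= f1 (g0 (g0 s)) <= g0 (g0 R)).
    { split.
      - rewrite <- f1a at 1. apply (f_le f1); auto; lra.
      - rewrite <- (HB (g0 (g0 R))) by lra. apply (f_le f1); auto; lra. }
    split.
    + assert (k2 := Hf0in (f1 (g0 (g0 s))) ltac:(lra)). apply (Hf0in _ k2).
    + rewrite <- (inv_g f0 g0 R) by (auto; lra).
      rewrite <- (inv_g f0 g0 (g0 R)) by (auto; lra).
      assert (q1 := Hf0in (g0 (g0 R)) ltac:(lra)).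
      assert (q2 := Hf0in (f1 (g0 (g0 s))) ltac:(lra)).
      assert (q3 : f0 (f1 (g0 (g0 s))) <= f0 (g0 (g0 R))) by (apply (f_le f0); auto; lra).
      apply (f_le f0); auto; lra.
  - intros s Hs. apply XiX; auto; lra.
  - intros s Hs. apply YiY; auto; lra.
Qed.
Theorem lemma2p7 (f0 f1 g0 g1 : R -> R) (a c : R) (n : nat) (b d : nat -> R) :
  PL0 f0 -> PL0 f1 ->
  inverse_on_I f0 g0 -> inverse_on_I f1 g1 ->
  orbital f0 a c -> ~ orbital f1 a c ->
  (forall u v, orbital f1 u v ->
     (a <= u /\ v <= c) \/ (v <= a \/ c <= u)) ->
  (1 <= n)%nat ->
  (forall i, (i < n)%nat -> orbital f1 (b i) (d i) /\ a <= b i /\ d i <= c) ->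
  (forall i, (S i < n)%nat -> d i <= b (S i)) ->
  (forall u v, orbital f1 u v -> a <= u -> v <= c ->
     exists i, (i < n)%nat /\ u = b i /\ v = d i) ->
  ( (up_bump f0 a c /\
     a < b 0%nat /\
     (exists p, 0 <= p /\ p < c /\ agree_on f0 f1 p c) /\
     d (pred n) = c /\
     (forall p, 0 <= p -> p < c -> agree_on f0 f1 p c ->
        (forall q, 0 <= q -> q < c -> agree_on f0 f1 q c -> p <= q) ->
        f0 (b (pred n)) >= p) /\
     f0 (b 0%nat) > b (pred n))
  \/
    (down_bump f0 a c /\
     d (pred n) < c /\
     (exists rho, a < rho /\ rho <= 1 /\ agree_on f0 f1 a rho) /\
     b 0%nat = a /\
     (forall rho, a < rho -> rho <= 1 -> agree_on f0 f1 a rho ->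
        (forall q, a < q -> q <= 1 -> agree_on f0 f1 a q -> q <= rho) ->
        f0 (d 0%nat) <= rho) /\
     f0 (d (pred n)) < d 0%nat) ) ->
  forall t, a <= t <= c ->
    comm_act (fun s => g1 (f0 s))            (* x = f0 f1^-1 *)
             (fun s => g0 (f1 s))            (* x^-1 = f1 f0^-1 *)
             (fun s => f0 (f0 (f1 (g0 (g0 s)))))   (* y = f0^-2 f1 f0^2 *)
             (fun s => f0 (f0 (g1 (g0 (g0 s)))))   (* y^-1 = f0^-2 f1^-1 f0^2 *)
             t = t.

Proof.
  intros Hf0 Hf1 Hg0 Hg1 Horb Hnorb Hdich Hn Hbi Hdb Hall [Hup|Hdown] t Ht.
  - exact (up_case f0 f1 g0 g1 a c n b d Hf0 Hf1 Hg0 Hg1 Horb Hdich Hn Hbi Hdb Hall Hup t Ht).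
  - exact (down_case f0 f1 g0 g1 a c n b d Hf0 Hf1 Hg0 Hg1 Horb Hdich Hn Hbi Hdb Hall Hdown t Ht).
Qed.
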